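(* Let $X$ be a finite set of proposals with $m=|X|$. Let $s$ be a normalised positional scoring function given by a scoring vector $(s_1,\ldots,s_m)\in\mathbb{R}^m$, and let $p$ be any array of probability distributions $p_{R,x}$. Then the score-based DSF $\Delta^p_s$ satisfies Weak Position Unanimity: for every profile $R$ and every proposal $x$ that occurs in the same position in every agent's ranking in $R$, either $x\notin\Delta^p_s(R)$ or $\Delta^p_s(R)=X$.
   Context: Let $X!$ be the set of strict linear orders on $X$. A profile is a function $R:N\to X!$ with $N\subset\mathbb{N}$ finite and nonempty; a DSF maps every profile to a nonempty subset of $X$. For $i\in N$, $\mathit{pos}^R_i(x)=1+|\{y\in X: y \text{ is ranked above } x \text{ by } R_i\}|$. For $C\subseteq N$, $R{\restriction_C}$ is the restriction of $R$ to $C$, and $\overline{C}=N\setminus C$. The normalised positional scoring function with vector $(s_1,\ldots,s_m)$ assigns, for nonempty $C\subseteq N$, $s(R{\restriction_C},x)=\frac{1}{|C|}\sum_{i\in C} s_{\mathit{pos}^R_i(x)}$. Define $\mathit{div}_s(R,x,C,\overline{C})=|s(R{\restriction_C},x)-s(R{\restriction_{\overline{C}}},x)|$ if $C$ and $\overline{C}$ are both nonempty, and $0$ otherwise. For each profile $R:N\to X!$ and proposal $x$, $p_{R,x}$ is a probability distribution on unordered decompositions $\{C,\overline{C}\}$ of $N$ into two complementary subsets. The score-based DSF is $\Delta^p_s(R)=\arg\max_{x\in X}\sum_{\{C,\overline{C}\}} p_{R,x}(\{C,\overline{C}\})\cdot \mathit{div}_s(R,x,C,\overline{C})$. *)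

(* Defs.v *)
From HB Require Import structures.
From mathcomp Require Import all_boot all_order all_algebra.
From mathcomp Require Import finmap.
Set Implicit Arguments. Unset Strict Implicit. Unset Printing Implicit Defensive.
Import Order.TTheory GRing.Theory Num.Theory.
Local Open Scope fset_scope.
Local Open Scope ring_scope.

(* A strict linear order on X, given as a relation: [r y x] means
   "y is ranked above x". *)
Definition strict_linear_order (X : finType) (r : rel X) : Prop :=
  [/\ irreflexive r, transitive r & forall x y, x != y -> r x y || r y x].

(* A profile: a finite nonempty set N of agents (natural numbers) and
   a strict linear order R_i for each agent i in N (values of [pref]
   outside N are irrelevant). *)
Record profile (X : finType) := Profile {
  agents : {fset nat};
  agents_nonempty : agents != fset0;
  pref : nat -> rel X;
  pref_lin : forall i, i \in agents -> strict_linear_order (pref i)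
}.

Definition pos (X : finType) (P : profile X) (i : nat) (x : X) : nat :=
  (#|[set y | pref P i y x]|).+1.

(* normalised positional score of x on the restriction of P to C
   (s k is the k-th entry s_k of the scoring vector, k = 1..|X|) *)
Definition nscore (R : realFieldType) (X : finType) (s : nat -> R)
  (P : profile X) (C : {fset nat}) (x : X) : R :=
  (#|` C|%:R)^-1 * \sum_(i <- C) s (pos P i x).

Definition div_s (R : realFieldType) (X : finType) (s : nat -> R)
  (P : profile X) (x : X) (C : {fset nat}) : R :=
  let D := agents P `\` C in
  if (C != fset0) && (D != fset0)
  then `| nscore s P C x - nscore s P D x |
  else 0.

Definition decomps (N : {fset nat}) : {fset {fset {fset nat}}} :=
  [fset [fset C; N `\` C] | C in fpowerset N].

(* divergence of an unordered decomposition d = {C, N \ C}: div_s is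
   symmetric in its two parts, so we average it over the (one or two)
   members of d, which equals div_s(R, x, C, N \ C). *)
Definition dec_div (R : realFieldType) (X : finType) (s : nat -> R)
  (P : profile X) (x : X) (d : {fset {fset nat}}) : R :=
  (#|` d|%:R)^-1 * \sum_(C <- d) div_s s P x C.

Definition is_distribution (R : realFieldType) (N : {fset nat})
  (q : {fset {fset nat}} -> R) : Prop :=
  (forall d, d \in decomps N -> 0 <= q d) /\
  \sum_(d <- decomps N) q d = 1.

Definition exp_div (R : realFieldType) (X : finType) (s : nat -> R)
  (p : profile X -> X -> {fset {fset nat}} -> R) (P : profile X) (x : X) : R :=
  \sum_(d <- decomps (agents P)) p P x d * dec_div s P x d.

Definition score_DSF (R : realFieldType) (X : finType) (s : nat -> R)
  (p : profile X -> X -> {fset {fset nat}} -> R) (P : profile X) : {set X} :=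
  [set x | [forall y, exp_div s p P y <= exp_div s p P x]].

Definition same_position (X : finType) (P : profile X) (x : X) : Prop :=
  exists k, forall i, i \in agents P -> pos P i x = k.

(* Main.v *)
Require Import Defs.
From HB Require Import structures.
From mathcomp Require Import all_boot all_order all_algebra.
From mathcomp Require Import finmap.
Import Order.TTheory GRing.Theory Num.Theory.
Local Open Scope ring_scope.
Set Implicit Arguments.

Lemma sum_const_seq (R : realFieldType) (r : seq nat) (c : R) :
  \sum_(i <- r) c = (size r)%:R * c.
Proof.
elim: r => [|a r IH]; first by rewrite big_nil mul0r.
by rewrite big_cons IH /= -add1n natrD mulrDl mul1r.
Qed.

Lemma nscore_const (R : realFieldType) (X : finType) (s : nat -> R)
  (P : profile X) (x : X) k C :
  (forall i, i \in agents P -> pos P i x = k) ->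
  (C `<=` agents P)%fset -> C != fset0 -> nscore s P C x = s k.
Proof.
move=> Hk HC C0; rewrite /nscore.
rewrite big_seq (eq_bigr (fun _ => s k)); last first.
  by move=> i iC; rewrite Hk //; apply: (fsubsetP HC).
rewrite -big_seq sum_const_seq mulrA mulVf ?mul1r //.
by rewrite pnatr_eq0 cardfs_eq0.
Qed.

Lemma div_s0 (R : realFieldType) (X : finType) (s : nat -> R)
  (P : profile X) (x : X) k C :
  (forall i, i \in agents P -> pos P i x = k) ->
  (C `<=` agents P)%fset -> div_s s P x C = 0.
Proof.
move=> Hk HC; rewrite /div_s; case: ifP => // /andP[C0 D0].
rewrite !(nscore_const _ s _ Hk) ?fsubsetDl // subrr normr0 //.
Qed.

Lemma div_s_ge0 (R : realFieldType) (X : finType) (s : nat -> R)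
  (P : profile X) (x : X) C : 0 <= div_s s P x C.
Proof. by rewrite /div_s; case: ifP. Qed.

Lemma exp_div_ge0 (R : realFieldType) (X : finType) (s : nat -> R)
  (p : profile X -> X -> {fset {fset nat}} -> R)
  (hp : forall (P : profile X) (x : X), is_distribution (agents P) (p P x))
  P y : 0 <= exp_div s p P y.
Proof.
rewrite /exp_div big_seq; apply: sumr_ge0 => d dD.
apply: mulr_ge0; first by case: (hp P y) => H _; apply: H.
rewrite /dec_div; apply: mulr_ge0; first by rewrite invr_ge0 ler0n.
by apply: sumr_ge0 => C _; apply: div_s_ge0.
Qed.

Lemma exp_div_x0 (R : realFieldType) (X : finType) (s : nat -> R)
  (p : profile X -> X -> {fset {fset nat}} -> R) P x k :
  (forall i, i \in agents P -> pos P i x = k) -> exp_div s p P x = 0.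
Proof.
move=> Hk; rewrite /exp_div big_seq big1 // => d dD.
rewrite /dec_div big_seq big1 ?mulr0 // => C Cd.
apply: (div_s0 _ s _ Hk).
move: Cd; move: dD; rewrite /decomps => /imfsetP [C' /= C'P ->]. rewrite !inE => /orP [/eqP ->|/eqP ->]; last exact: fsubsetDl.
by rewrite fpowersetE in C'P.
Qed.

Theorem proposition2 (R : realFieldType) (X : finType) (s : nat -> R)
  (p : profile X -> X -> {fset {fset nat}} -> R)
  (hp : forall (P : profile X) (x : X), is_distribution (agents P) (p P x)) :
  forall (P : profile X) (x : X), same_position P x ->
    x \notin score_DSF s p P \/ score_DSF s p P = [set: X].
Proof.
move=> P x [k Hk].
have Ex := exp_div_x0 _ s p Hk.
case: (boolP (x \in score_DSF s p P)) => xin; [right|by left].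
apply/setP => z; rewrite !inE.
move: xin; rewrite inE => /forallP H.
apply/forallP => y.
have := H y; rewrite Ex => Hy.
have Hz := H z; rewrite Ex in Hz.
have -> : exp_div s p P z = 0 by apply/eqP; rewrite eq_le Hz exp_div_ge0.
by [].
Qed.
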